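(* Let $G$ be a group with identity $e$, $A$ a finite set with $|A|\ge2$, $S\subseteq G$ finite with $e\in S$, and suppose $(\mathcal P,f)$ generates a local map $\mu:A^S\to A$. (1) If there exist $z,w\in\mathcal P^c$ with $z\neq w$ and $\mathrm{Res}_e(z)=\mathrm{Res}_e(w)$, then $e$ is essential for $\mu$. (2) If $f$ is well-behaved and there exist $p,q\in\mathcal P$ with $p\neq q$ and $\mathrm{Res}_e(p)=\mathrm{Res}_e(q)$, then $e$ is essential for $\mu$.
   Context: $A^S$ is the set of functions $S\to A$. For $s\in S$, $\mathrm{Res}_s(z)=z|_{S\setminus\{s\}}$. An element $s\in S$ is essential for $\mu$ if there exist $z,w\in A^S$ with $\mathrm{Res}_s(z)=\mathrm{Res}_s(w)$ but $\mu(z)\neq\mu(w)$. The pair $(\mathcal P,f)$ generates $\mu$ if $\mathcal P=\{z\in A^S:\mu(z)\neq z(e)\}$ and $f:\mathcal P\to A$ is the restriction of $\mu$ to $\mathcal P$; $\mathcal P^c=A^S\setminus\mathcal P$. The function $f$ is well-behaved if for all $p,q\in\mathcal P$: $p(e)=q(e)$ if and only if $f(p)=f(q)$. *)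

(* Defs.v *)
From HB Require Import structures.
From mathcomp Require Import all_boot all_order.
From mathcomp Require Import finmap.
Set Implicit Arguments. Unset Strict Implicit. Unset Printing Implicit Defensive.
Local Open Scope fset_scope.

Definition config (G : choiceType) (S : {fset G}) (A : Type) := S -> A.

(* Res_s(z) = Res_s(w): z and w agree on S \ {s}. *)
Definition res_eq (G : choiceType) (S : {fset G}) (A : Type) (s : G)
  (z w : config S A) : Prop := forall t : S, val t <> s -> z t = w t.

Definition essential (G : choiceType) (S : {fset G}) (A : Type)
  (mu : config S A -> A) (s : G) : Prop :=
  exists z w : config S A, res_eq s z w /\ mu z <> mu w.

Definition generates (G : choiceType) (S : {fset G}) (A : Type) (e : G)
  (he : e \in S) (mu : config S A -> A)
  (P : config S A -> Prop) (f : {z : config S A | P z} -> A) : Prop :=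
  (forall z, P z <-> mu z <> z [` he]) /\
  (forall (z : config S A) (hz : P z), f (exist _ z hz) = mu z).

Definition well_behaved (G : choiceType) (S : {fset G}) (A : Type) (e : G)
  (he : e \in S) (P : config S A -> Prop) (f : {z : config S A | P z} -> A) : Prop :=
  forall p q : {z : config S A | P z},
    proj1_sig p [` he] = proj1_sig q [` he] <-> f p = f q.
Arguments generates {G S A} e he mu P f.
Arguments well_behaved {G S A} e he P f.

(* Main.v *)
Require Import Defs.
From HB Require Import structures.
From mathcomp Require Import all_boot all_order.
From mathcomp Require Import finmap.
From Stdlib Require Import Classical.
Local Open Scope fset_scope.

From Stdlib Require Import FunctionalExtensionality.

Lemma res_eq_ext (G : choiceType) (S : {fset G}) (A : Type) (e : G) (he : e \in S)
  (z w : config S A) : res_eq e z w -> z [` he] = w [` he] -> z = w.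
Proof.
move=> hr he'; apply: functional_extensionality => t.
case: (eqVneq (val t) e) => [ht|ht].
  have -> : t = [` he] by apply: val_inj.
  exact: he'.
by apply: hr; apply/eqP.
Qed.

Theorem mainTheorem4
  (G : choiceType) (mul : G -> G -> G) (inv : G -> G) (e : G)
  (mulA : forall x y z, mul x (mul y z) = mul (mul x y) z)
  (mul1g : forall x, mul e x = x) (mulg1 : forall x, mul x e = x)
  (mulVg : forall x, mul (inv x) x = e) (mulgV : forall x, mul x (inv x) = e)
  (A : finType) (hA : 2 <= #|A|)
  (S : {fset G}) (he : e \in S)
  (mu : config S A -> A)
  (P : config S A -> Prop) (f : {z : config S A | P z} -> A)
  (hgen : generates e he mu P f) :
  ((exists z w : config S A, ~ P z /\ ~ P w /\ z <> w /\ res_eq e z w) ->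
      essential mu e) /\
  (well_behaved e he P f ->
   (exists p q : config S A, P p /\ P q /\ p <> q /\ res_eq e p q) ->
      essential mu e).
Proof.
case: hgen => hP hf; split.
  case=> z [w [nz [nw [zw hr]]]]; exists z, w; split => //.
  have ez : mu z = z [` he] by apply: Classical_Prop.NNPP => h; apply: nz; apply/hP.
  have ew : mu w = w [` he] by apply: Classical_Prop.NNPP => h; apply: nw; apply/hP.
  rewrite ez ew => h; apply: zw; exact: (@res_eq_ext _ _ _ _ he _ _ hr h).
move=> wb [p [q [pp [pq [npq hr]]]]]; exists p, q; split => //.
rewrite -(hf p pp) -(hf q pq) => h.
apply: npq; apply: (@res_eq_ext _ _ _ _ he _ _ hr).
exact: (proj2 (wb (exist _ p pp) (exist _ q pq)) h).
Qed.
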